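(* Let $m\ge 1$, $k\ge 2$ and $n\ge k-1$. The polynomials $$(x_1\cdots x_n)^m(x_1^{l_1}\cdots x_n^{l_n})^{m+1}(x_1^d+\cdots+x_n^d),$$ where $(d,l_1,\ldots,l_n)$ ranges over all tuples of nonnegative integers with $d+(m+1)(l_1+\cdots+l_n)=(m+1)(k-1)-1$, are linearly independent over $\mathbb{R}$. Hence they form a basis of $W_{m,k}$.
   Context: $W_{m,k}$ denotes the real span of exactly these polynomials. *)

(* Defs.v *)
From HB Require Import structures.
From mathcomp Require Import all_boot all_order all_algebra.
From mathcomp Require Import reals.
From mathcomp Require Import mpoly.
Set Implicit Arguments. Unset Strict Implicit. Unset Printing Implicit Defensive.
Import Order.TTheory GRing.Theory Num.Theory.
Local Open Scope ring_scope.

(* Index type for tuples (d, l_1, ..., l_n) with all entries bounded by N;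
   the actual index set is cut out by the predicate [admissible]. *)
Definition idxT (n N : nat) : finType := ('I_N.+1 * {ffun 'I_n -> 'I_N.+1})%type.

Definition admissible (n m k : nat) (t : idxT n ((m.+1) * (k.-1))) : bool :=
  (t.1 : nat) + m.+1 * (\sum_(i < n) (t.2 i : nat)) == (m.+1 * k.-1).-1.

Definition Wpoly (R : realType) (n m : nat) (d : nat) (l : 'I_n -> nat)
  : {mpoly R[n]} :=
  (\prod_(i < n) 'X_i) ^+ m
  * (\prod_(i < n) 'X_i ^+ l i) ^+ m.+1
  * (\sum_(i < n) 'X_i ^+ d).

Definition Wfamily_lin_indep (R : realType) (n m k : nat) : Prop :=
  forall c : idxT n (m.+1 * k.-1) -> R,
    \sum_(t | @admissible n m k t) c t *: @Wpoly R n m t.1 (fun i => t.2 i) = 0 ->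
    forall t, @admissible n m k t -> c t = 0.

(* Main.v *)
Require Import Defs.
From HB Require Import structures.
From mathcomp Require Import all_boot all_order all_algebra.
From mathcomp Require Import reals.
From mathcomp Require Import mpoly.
Set Implicit Arguments. Unset Strict Implicit. Unset Printing Implicit Defensive.
Import Order.TTheory GRing.Theory Num.Theory.
Local Open Scope ring_scope.

Definition mon n m (d : nat) (l : 'I_n -> nat) (j : 'I_n) : 'X_{1..n} :=
  [multinom (m + m.+1 * l i + (i == j) * d)%N | i < n].

Lemma sumU n (a : 'I_n -> nat) i : (\sum_x (U_(x) *+ a x)%MM i)%N = a i.
Proof.
rewrite (bigD1 i) //= big1 ?addn0; first by rewrite mulmnE mnm1E eqxx mul1n.
by move=> x /negbTE hx; rewrite mulmnE mnm1E hx.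
Qed.

Lemma Wpoly_sum (R : realType) n m d l :
  @Wpoly R n m d l = \sum_(j < n) 'X_[mon m d l j].
Proof.
rewrite /Wpoly mulr_sumr; apply: eq_bigr => j _.
rewrite mprodXnE -[\prod_(i < n) 'X_i]/(\prod_(i < n) 'X_[R, U_(i)] ^+ 1) mprodXnE.
rewrite !mpolyXn -!mpolyXD; congr mpolyX.
apply/mnmP => i; rewrite /mon mnmE !mnmDE !mulmnE !mnm_sumE mnm1E !sumU.
by rewrite mul1n (eq_sym j) (mulnC (l i)).
Qed.

From mathcomp Require Import zify.

Lemma nodiv M A B : (1 < M)%N -> (M * A + 1)%N = (M * B)%N -> False.
Proof.
move=> hM e; case: (ltnP A B) => h.
  have : (M * A.+1 <= M * B)%N by rewrite leq_mul2l h orbT.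
  rewrite mulnS; lia.
have : (M * B <= M * A)%N by rewrite leq_mul2l h orbT.
lia.
Qed.

Lemma adm_nodiv n m k (t : idxT n (m.+1 * k.-1)) a :
  (1 <= m)%N -> (2 <= k)%N -> admissible t -> (t.1 : nat) <> (m.+1 * a)%N.
Proof.
move=> hm hk /eqP ht e; rewrite e in ht.
have hpos : (0 < m.+1 * k.-1)%N by rewrite muln_gt0 /=; lia.
apply: (@nodiv m.+1 (a + \sum_(i < n) (t.2 i : nat)) k.-1) => //.
have ht2 : (m.+1 * a + m.+1 * \sum_(i < n) (t.2 i : nat))%N = (m.+1 * k.-1).-1 := ht.
by rewrite mulnDr ht2 addn1 prednK.
Qed.

Lemma idx_eq n N (t t' : idxT n N) :
  (t'.1 : nat) = t.1 -> (forall x, (t'.2 x : nat) = t.2 x) -> t' = t.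
Proof.
case: t t' => [d l] [d' l'] /= h1 h2; congr pair; first exact: val_inj.
by apply/ffunP => x; apply: val_inj; apply: h2.
Qed.

Theorem lemma4p3 (R : realType) (m k n : nat) :
  (1 <= m)%N -> (2 <= k)%N -> (k.-1 <= n)%N ->
  Wfamily_lin_indep R n m k.
Proof.
move=> hm hk hn c hsum.
suff H : forall q t, admissible t -> ((t.1 : nat) < q)%N -> c t = 0.
  by move=> t ht; apply: (H (t.1).+1).
elim=> [|q IH] t ht //.
rewrite ltnS leq_eqVlt => /orP [/eqP eq|lt]; last exact: IH.
have IH' : forall t', admissible t' -> ((t'.1 : nat) < t.1)%N -> c t' = 0.
  by move=> t' h1 h2; apply: IH => //; rewrite -eq.
clear IH eq.
set d := (t.1 : nat); set l := fun i => (t.2 i : nat).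
have [i hi] : exists i, l i = 0%N.
  case: (pickP (fun i => l i == 0%N)) => [i /eqP hi|H]; first by exists i.
  exfalso.
  have hS : (n <= \sum_(i < n) l i)%N.
    rewrite -[X in (X <= _)%N]card_ord -sum1_card; apply: leq_sum => x _.
    by move: (H x); rewrite lt0n => ->.
  move: ht; rewrite /admissible => /eqP ht.
  have : (m.+1 * k.-1 <= m.+1 * \sum_(i < n) l i)%N.
    by rewrite leq_mul2l (leq_trans hn hS) orbT.
  have ht2 : (d + m.+1 * \sum_(i < n) l i)%N = (m.+1 * k.-1).-1 := ht.
  have hpos : (0 < m.+1 * k.-1)%N by rewrite muln_gt0 /=; lia.
  move: ht2 hpos; generalize (m.+1 * \sum_(i < n) l i)%N (m.+1 * k.-1)%N.
  lia.
have hd0 : (0 < d)%N.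
  rewrite lt0n; apply/eqP => e; apply: (@adm_nodiv n m k t 0) => //.
  by rewrite muln0.
move/(congr1 (mcoeff (mon m d l i))): hsum.
rewrite raddf_sum mcoeff0 (bigD1 t) //= big1 ?addr0.
  rewrite mcoeffZ Wpoly_sum raddf_sum (bigD1 i) //= big1 ?addr0.
    by rewrite mcoeffX eqxx mulr1.
  move=> j hj; rewrite mcoeffX; apply/eqP; rewrite pnatr_eq0 eqb0.
  apply/negP => /eqP /mnmP /(_ i); rewrite /mon !mnmE eqxx eq_sym (negbTE hj) /=; rewrite /l /d in hi hd0 *.
  rewrite hi muln0; lia.
move=> t' /andP [ht' hne].
case: (ltnP (t'.1 : nat) d) => hlt; first by rewrite mcoeffZ (IH' t' ht' hlt) mul0r.
rewrite mcoeffZ Wpoly_sum raddf_sum big1 ?mulr0 // => j _.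
rewrite /= mcoeffX; apply/eqP; rewrite pnatr_eq0 eqb0.
apply/negP => /eqP /mnmP E.
move: (E i); rewrite /mon !mnmE eqxx hi /= => Ei.
case: (eqVneq i j) => [eij|nij].
- subst j; rewrite eqxx /= in Ei.
  have hli : (t'.2 i : nat) = 0%N by lia.
  have hdd : (t'.1 : nat) = d by lia.
  move/eqP: hne; apply.
  apply: idx_eq => // x.
  case: (eqVneq x i) => [->|nx]; first by rewrite hli -hi.
  move: (E x); rewrite /mon !mnmE (negbTE nx) /= !mul0n !addn0 => /eqP.
  by rewrite eqn_add2l eqn_mul2l /= => /eqP.
- move: Ei; rewrite (negbTE nij) /= => Ei.
  apply: (@adm_nodiv n m k t (t'.2 i)) => //; rewrite -/d; rewrite muln0 mul0n mul1n !addn0 in Ei; lia.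
Qed.
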